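(* Let $L$ be a multi-adjoint lattice, let $\mathcal{P}$ be an sMALP program over $L$, and let $\mathcal{Q}$ be a goal. Then for every symbolic substitution $\Theta$ for $\mathrm{sym}(\mathcal{P})$, the following are equivalent: (i) $\langle v;\theta\rangle$ is a fuzzy computed answer (fca) for $\mathcal{Q}$ in the MALP program $\mathcal{P}\Theta$; (ii) there exists a symbolic fuzzy computed answer (sfca) $\langle \mathcal{Q}';\theta'\rangle$ for $\mathcal{Q}$ in $\mathcal{P}$ such that $\langle \mathcal{Q}'\Theta;\theta'\rangle \to_{IS}^{*} \langle v;\theta'\rangle$, where $\theta'$ is a renaming of $\theta$.
   Context: A multi-adjoint lattice is a tuple $\langle L,\preceq,\&_1,\leftarrow_1,\dots,\&_n,\leftarrow_n\rangle$ where $\langle L,\preceq\rangle$ is a bounded complete lattice (bottom $\bot$, top $\top$), each conjunctor $\&_i$ is increasing in both arguments, each implication $\leftarrow_i$ is increasing in its first argument (consequent) and decreasing in its second (antecedent), and each $\langle \&_i,\leftarrow_i\rangle$ is an adjoint pair: for all $x,y,z\in L$, $x\preceq (y\leftarrow_i z)$ iff $(x\,\&_i\, z)\preceq y$. The lattice may also carry further connectives (conjunctions, disjunctions, aggregators); every $n$-ary connective $\varsigma$ of $L$ has a truth function $[\![\varsigma]\!]:L^n\to L$ that is monotone with $[\![\varsigma]\!](\top,\dots,\top)=\top$ and $[\![\varsigma]\!](\bot,\dots,\bot)=\bot$. Formulas: over a signature with variables, function symbols, predicate symbols, truth-degree constants (elements of $L$) and connectives of $L$, a well-formed formula is a value $v\in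 L$, an atom $p(t_1,\dots,t_n)$ with $t_i$ first-order terms, or $\varsigma(e_1,\dots,e_n)$ with $\varsigma$ a connective and $e_i$ formulas. In the symbolic language $\mathcal{L}^s_L$ one additionally allows symbolic values, symbolic adjoint pairs $\langle \&^s,\leftarrow^s\rangle$ and symbolic connectives, which are not defined on $L$ (have no truth function). An $L^s$-expression is a formula built only from values and connectives (concrete or symbolic), i.e. containing no atoms. An sMALP program over $L$ is a set of rules $(H\leftarrow_i \mathcal{B}\ \mathit{with}\ v)$ where $H$ is an atom, $\leftarrow_i$ is the implication of an adjoint pair of $L$ or of a symbolic adjoint pair, the body $\mathcal{B}$ is a formula of $\mathcal{L}^s_L$ without implications, and $v$ is an element of $L$ or a symbolic value. A fact $(H\ \mathit{with}\ v)$ is treated as $(H\leftarrow_i\top\ \mathit{with}\ v)$. A MALP program is an sMALP program with no symbolic values or connectives. A goal is a body formula. $\mathrm{sym}(\mathcal{P})$ is the set of symbolic values and connectives occurring in $\mathcal{P}$. States are pairs $\langle \mathcal{Q};\sigma\rangle$ ($\mathcal{Q}$ a symbolic goal, $\sigma$ a substitution). $\mathcal{Q}[A]$ denotes a formula with a selected atom $A$ in a context; $\mathcal{Q}[A/A']$ replaces it. Admissible steps $\to_{AS}$: (1) $\langle \mathcal{Q}[A];\sigma\rangle \to_{AS} \langle (\mathcal{Q}[A/v\,\&_i\,\mathcal{B}])\theta;\sigma\theta\rangle$ if $\theta=\mathrm{mgu}(\{H=A\})$ exists for a renamed-apart variant $(H\leftarrow_i\mathcal{B}\ \mathit{with}\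 v)$ of a rule of the program (symbolic values/connectives are not renamed), where $\&_i$ is the conjunction adjoint to $\leftarrow_i$ (for facts, $A$ is replaced by $v$ directly); (2) $\langle \mathcal{Q}[A];\sigma\rangle \to_{AS} \langle \mathcal{Q}[A/\bot];\sigma\rangle$ if no rule head unifies with $A$. A final admissible derivation $\langle\mathcal{Q};id\rangle\to_{AS}^*\langle\mathcal{Q}'';\theta\rangle$ is one where $\mathcal{Q}''$ is an $L^s$-expression; then $\langle\mathcal{Q}'';\theta$ restricted to the variables of $\mathcal{Q}\rangle$ is a symbolic admissible computed answer (saca). Interpretive steps $\to_{IS}$: $\langle \mathcal{Q}[\varsigma(r_1,\dots,r_n)];\sigma\rangle \to_{IS} \langle \mathcal{Q}[\varsigma(r_1,\dots,r_n)/r_{n+1}];\sigma\rangle$ where $\varsigma$ is a connective defined on $L$, $r_1,\dots,r_n\in L$, and $[\![\varsigma]\!](r_1,\dots,r_n)=r_{n+1}$. If, starting from a saca, $\langle\mathcal{Q}'';\sigma\rangle\to_{IS}^*\langle\mathcal{Q}';\theta\rangle$ and $\langle\mathcal{Q}';\theta\rangle$ cannot be further reduced, then $\langle\mathcal{Q}';\theta\rangle$ is a symbolic fuzzy computed answer (sfca) for the goal; if moreover $\mathcal{Q}'$ is a value of $L$, it is a fuzzy computed answer (fca). A symbolic substitution is a mapping from symbolic values and symbolic connectives to expressions built from values and connectives of $L$ (of matching kind), subject to: for a symbolic adjoint pair $\langle\&^s,\leftarrow^s\rangle$ and an adjoint pair $\langle\&_i,\leftarrow_i\rangle$ of $L$,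 $\leftarrow^s/\leftarrow_i\in\Theta$ iff $\&^s/\&_i\in\Theta$. For an expression $e$, $e\Theta$ replaces each symbolic symbol by its image; $\mathcal{P}\Theta$ is obtained by replacing every symbolic symbol in $\mathcal{P}$ by its image under $\Theta$ (when $\Theta$ covers $\mathrm{sym}(\mathcal{P})$, $\mathcal{P}\Theta$ is a MALP program). *)

(* Defs.v *)
From Stdlib Require Import List Arith.
Import ListNotations.
Set Implicit Arguments.

Record MALattice := {
  Lcar : Type;
  Lle : Lcar -> Lcar -> Prop;
  Lle_refl : forall x, Lle x x;
  Lle_trans : forall x y z, Lle x y -> Lle y z -> Lle x z;
  Lle_antisym : forall x y, Lle x y -> Lle y x -> x = y;
  Lbot : Lcar;
  Ltop : Lcar;
  Lbot_least : forall x, Lle Lbot x;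
  Ltop_greatest : forall x, Lle x Ltop;
  Lsup : forall A : Lcar -> Prop, exists s,
      (forall x, A x -> Lle x s) /\ (forall u, (forall x, A x -> Lle x u) -> Lle s u);
  Linf : forall A : Lcar -> Prop, exists s,
      (forall x, A x -> Lle s x) /\ (forall u, (forall x, A x -> Lle u x) -> Lle u s);
  (* finitely many adjoint pairs <&_i, <-_i>, indexed by Ladj *)
  Ladj : Type;
  Ladj_finite : exists l : list Ladj, forall i, In i l;
  Lconj : Ladj -> Lcar -> Lcar -> Lcar;
  (* Limpl i y z  is  (y <-_i z): y consequent, z antecedent *)
  Limpl : Ladj -> Lcar -> Lcar -> Lcar;
  Lconj_mono : forall i x x' y y', Lle x x' -> Lle y y' -> Lle (Lconj i x y) (Lconj i x' y');
  Limpl_mono : forall i y y' z z', Lle y y' -> Lle z' z -> Lle (Limpl i y z) (Limpl i y' z');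
  Ladjoint : forall i x y z, Lle x (Limpl i y z) <-> Lle (Lconj i x z) y;
  Lconn : Type;
  Larity : Lconn -> nat;
  Ltruth : Lconn -> list Lcar -> Lcar;
  Ltruth_mono : forall c xs ys, length xs = Larity c -> length ys = Larity c ->
      Forall2 Lle xs ys -> Lle (Ltruth c xs) (Ltruth c ys);
  Ltruth_top : forall c, Ltruth c (repeat Ltop (Larity c)) = Ltop;
  Ltruth_bot : forall c, Ltruth c (repeat Lbot (Larity c)) = Lbot
}.

(* Symbolic signature: symbolic values, symbolic connectives (with arity),
   symbolic adjoint pairs. *)
Record ssig := {
  SV : Type;
  SC : Type;
  sc_arity : SC -> nat;
  SA : Type
}.

Inductive term := Var (x : nat) | Fn (f : nat) (args : list term).

Definition subst := nat -> term.

Fixpoint tsubst (s : subst) (t : term) : term :=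
  match t with Var x => s x | Fn f ts => Fn f (map (tsubst s) ts) end.

Fixpoint tvars (t : term) : list nat :=
  match t with Var x => [x] | Fn _ ts => flat_map tvars ts end.

(* sigma theta : first sigma, then theta *)
Definition compose (s t : subst) : subst := fun x => tsubst t (s x).

Definition restrict (s : subst) (V : list nat) : subst :=
  fun x => if existsb (Nat.eqb x) V then s x else Var x.

Definition bijective (r : nat -> nat) : Prop :=
  exists r', forall x, r' (r x) = x /\ r (r' x) = x.

Definition rsubst (r : nat -> nat) : subst := fun x => Var (r x).

Definition subst_var (s : subst) (x : nat) : Prop :=
  s x <> Var x \/ exists y, s y <> Var y /\ In x (tvars (s y)).

Definition atom := (nat * list term)%type.

Definition asubst (s : subst) (a : atom) : atom := (fst a, map (tsubst s) (snd a)).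

Definition is_unifier (s : subst) (a b : atom) : Prop := asubst s a = asubst s b.

Definition is_mgu (s : subst) (a b : atom) : Prop :=
  is_unifier s a b /\
  (forall s', is_unifier s' a b -> exists d, forall x, s' x = tsubst d (s x)) /\
  (forall x, tsubst s (s x) = s x).

Inductive value (L : MALattice) (S : ssig) :=
  | VConc (r : Lcar L) | VSym (s : SV S).
Arguments VConc {L S}. Arguments VSym {L S}.

Inductive cconn (L : MALattice) := CA (i : Ladj L) | CO (c : Lconn L).
Arguments CA {L}. Arguments CO {L}.

Definition ccarity (L : MALattice) (c : cconn L) : nat :=
  match c with CA _ => 2 | CO c => Larity L c end.

Definition ctruth (L : MALattice) (c : cconn L) (rs : list (Lcar L)) : Lcar L :=
  match c with
  | CA i => match rs with [x; y] => Lconj L i x y | _ => Lbot L end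
  | CO c => Ltruth L c rs
  end.

(* connective symbols: concrete, symbolic connective, symbolic conjunction &^s *)
Inductive csym (L : MALattice) (S : ssig) :=
  | Conc (c : cconn L) | SymC (s : SC S) | SymA (s : SA S).
Arguments Conc {L S}. Arguments SymC {L S}. Arguments SymA {L S}.

Definition carity (L : MALattice) (S : ssig) (c : csym L S) : nat :=
  match c with Conc c => ccarity c | SymC s => sc_arity S s | SymA _ => 2 end.

Inductive formula (L : MALattice) (S : ssig) :=
  | FVal (v : value L S)
  | FAtom (p : nat) (ts : list term)
  | FConn (c : csym L S) (args : list (formula L S)).
Arguments FVal {L S}. Arguments FAtom {L S}. Arguments FConn {L S}.

Fixpoint wf_formula {L S} (f : formula L S) : bool :=
  match f with
  | FVal _ => true
  | FAtom _ _ => true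
  | FConn c args => Nat.eqb (length args) (carity c) && forallb wf_formula args
  end.

Fixpoint has_atom {L S} (f : formula L S) : bool :=
  match f with
  | FVal _ => false
  | FAtom _ _ => true
  | FConn _ args => existsb has_atom args
  end.

Definition lexpr {L S} (f : formula L S) : Prop := has_atom f = false.

Fixpoint fsubst {L S} (s : subst) (f : formula L S) : formula L S :=
  match f with
  | FVal v => FVal v
  | FAtom p ts => FAtom p (map (tsubst s) ts)
  | FConn c args => FConn c (map (fsubst s) args)
  end.

Fixpoint fvars {L S} (f : formula L S) : list nat :=
  match f with
  | FVal _ => []
  | FAtom _ ts => flat_map tvars ts
  | FConn _ args => flat_map fvars args
  end.

Definition v_sv {L S} (v : value L S) : list (SV S) :=
  match v with VSym s => [s] | _ => [] end.

Fixpoint f_sv {L S} (f : formula L S) : list (SV S) :=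
  match f with
  | FVal v => v_sv v
  | FAtom _ _ => []
  | FConn _ args => flat_map f_sv args
  end.

Definition c_sc {L S} (c : csym L S) : list (SC S) :=
  match c with SymC s => [s] | _ => [] end.
Definition c_sa {L S} (c : csym L S) : list (SA S) :=
  match c with SymA s => [s] | _ => [] end.

Fixpoint f_sc {L S} (f : formula L S) : list (SC S) :=
  match f with
  | FConn c args => c_sc c ++ flat_map f_sc args
  | _ => []
  end.

Fixpoint f_sa {L S} (f : formula L S) : list (SA S) :=
  match f with
  | FConn c args => c_sa c ++ flat_map f_sa args
  | _ => []
  end.

Definition nosym {L S} (f : formula L S) : Prop :=
  f_sv f = [] /\ f_sc f = [] /\ f_sa f = [].

Inductive ctx (L : MALattice) (S : ssig) :=
  | Hole
  | CCtx (c : csym L S) (l : list (formula L S)) (C : ctx L S) (r : list (formula L S)).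
Arguments Hole {L S}. Arguments CCtx {L S}.

Fixpoint fill {L S} (C : ctx L S) (f : formula L S) : formula L S :=
  match C with
  | Hole => f
  | CCtx c l C' r => FConn c (l ++ fill C' f :: r)
  end.

Inductive adjsym (L : MALattice) (S : ssig) := AConc (i : Ladj L) | ASym (s : SA S).
Arguments AConc {L S}. Arguments ASym {L S}.

Definition adj_conj {L S} (a : adjsym L S) : csym L S :=
  match a with AConc i => Conc (CA i) | ASym s => SymA s end.

(* Rule p ts a B w  is  (p(ts) <-_a B with w);  Fact p ts w  is  (p(ts) with w) *)
Inductive rule (L : MALattice) (S : ssig) :=
  | Rule (p : nat) (ts : list term) (a : adjsym L S) (B : formula L S) (w : value L S)
  | Fact (p : nat) (ts : list term) (w : value L S).
Arguments Rule {L S}. Arguments Fact {L S}.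

Definition program (L : MALattice) (S : ssig) := list (rule L S).

Definition head {L S} (R : rule L S) : atom :=
  match R with Rule p ts _ _ _ => (p, ts) | Fact p ts _ => (p, ts) end.

Definition rule_vars {L S} (R : rule L S) : list nat :=
  match R with
  | Rule _ ts _ B _ => flat_map tvars ts ++ fvars B
  | Fact _ ts _ => flat_map tvars ts
  end.

Definition rsubst_rule {L S} (s : subst) (R : rule L S) : rule L S :=
  match R with
  | Rule p ts a B w => Rule p (map (tsubst s) ts) a (fsubst s B) w
  | Fact p ts w => Fact p (map (tsubst s) ts) w
  end.

(* what the selected atom is replaced by: v &_i B, or v for facts *)
Definition replacement {L S} (R : rule L S) : formula L S :=
  match R with
  | Rule _ _ a B w => FConn (adj_conj a) [FVal w; B]
  | Fact _ _ w => FVal w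
  end.

Definition wf_rule {L S} (R : rule L S) : Prop :=
  match R with Rule _ _ _ B _ => wf_formula B = true | Fact _ _ _ => True end.

Definition wf_program {L S} (P : program L S) : Prop := forall R, In R P -> wf_rule R.

Definition r_sv {L S} (R : rule L S) : list (SV S) :=
  match R with Rule _ _ _ B w => v_sv w ++ f_sv B | Fact _ _ w => v_sv w end.
Definition r_sc {L S} (R : rule L S) : list (SC S) :=
  match R with Rule _ _ _ B _ => f_sc B | Fact _ _ _ => [] end.
Definition r_sa {L S} (R : rule L S) : list (SA S) :=
  match R with
  | Rule _ _ a B _ => match a with ASym s => [s] | AConc _ => [] end ++ f_sa B
  | Fact _ _ _ => []
  end.

Definition state (L : MALattice) (S : ssig) := (formula L S * subst)%type.

Definition renamed_apart {L S} (r : nat -> nat) (R : rule L S) (Q : formula L S)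
    (sg : subst) : Prop :=
  bijective r /\
  forall x, In x (rule_vars (rsubst_rule (rsubst r) R)) ->
    ~ In x (fvars Q) /\ ~ subst_var sg x.

Inductive as_step {L S} (P : program L S) : state L S -> state L S -> Prop :=
  | as_rule : forall C p ts sg R r th,
      In R P ->
      renamed_apart r R (fill C (FAtom p ts)) sg ->
      is_mgu th (head (rsubst_rule (rsubst r) R)) (p, ts) ->
      as_step P (fill C (FAtom p ts), sg)
        (fsubst th (fill C (replacement (rsubst_rule (rsubst r) R))), compose sg th)
  | as_fail : forall C p ts sg,
      (forall R r th, In R P -> renamed_apart r R (fill C (FAtom p ts)) sg ->
         ~ is_unifier th (head (rsubst_rule (rsubst r) R)) (p, ts)) ->
      as_step P (fill C (FAtom p ts), sg) (fill C (FVal (VConc (Lbot L))), sg).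

Inductive is_step {L S} : state L S -> state L S -> Prop :=
  | is_conn : forall C (c : cconn L) rs sg,
      length rs = ccarity c ->
      is_step (fill C (FConn (Conc c) (map (fun r => FVal (VConc r)) rs)), sg)
              (fill C (FVal (VConc (ctruth c rs))), sg).

Inductive star {A} (R : A -> A -> Prop) : A -> A -> Prop :=
  | star_refl : forall x, star R x x
  | star_step : forall x y z, R x y -> star R y z -> star R x z.

Definition saca {L S} (P : program L S) (Q Q'' : formula L S) (th : subst) : Prop :=
  exists sg, star (as_step P) (Q, Var) (Q'', sg) /\ lexpr Q'' /\
    forall x, th x = restrict sg (fvars Q) x.

Definition sfca {L S} (P : program L S) (Q Q' : formula L S) (th : subst) : Prop :=
  exists Q'', saca P Q Q'' th /\ star is_step (Q'', th) (Q', th) /\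
    ~ (exists st, is_step (Q', th) st).

Definition fca {L S} (P : program L S) (Q : formula L S) (v : Lcar L) (th : subst) : Prop :=
  sfca P Q (FVal (VConc v)) th.

(* partial maps; a symbolic adjoint pair is mapped as a whole to an adjoint pair
   of L (so <-^s/<-_i in Theta iff &^s/&_i in Theta) *)
Record ssubst (L : MALattice) (S : ssig) := {
  sv_map : SV S -> option (Lcar L);
  sc_map : SC S -> option (cconn L);
  sc_map_arity : forall s c, sc_map s = Some c -> ccarity c = sc_arity S s;
  sa_map : SA S -> option (Ladj L)
}.

Definition vapply {L S} (T : ssubst L S) (v : value L S) : value L S :=
  match v with
  | VSym s => match sv_map T s with Some r => VConc r | None => v end
  | _ => v
  end.

Definition capply {L S} (T : ssubst L S) (c : csym L S) : csym L S :=
  match c with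
  | SymC s => match sc_map T s with Some c' => Conc c' | None => c end
  | SymA s => match sa_map T s with Some i => Conc (CA i) | None => c end
  | _ => c
  end.

Definition aapply {L S} (T : ssubst L S) (a : adjsym L S) : adjsym L S :=
  match a with
  | ASym s => match sa_map T s with Some i => AConc i | None => a end
  | _ => a
  end.

Fixpoint fapply {L S} (T : ssubst L S) (f : formula L S) : formula L S :=
  match f with
  | FVal v => FVal (vapply T v)
  | FAtom p ts => FAtom p ts
  | FConn c args => FConn (capply T c) (map (fapply T) args)
  end.

Definition rapply {L S} (T : ssubst L S) (R : rule L S) : rule L S :=
  match R with
  | Rule p ts a B w => Rule p ts (aapply T a) (fapply T B) (vapply T w)
  | Fact p ts w => Fact p ts (vapply T w)
  end.

Definition papply {L S} (T : ssubst L S) (P : program L S) : program L S :=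
  map (rapply T) P.

(* Theta is a symbolic substitution for sym(P) *)
Definition covers {L S} (T : ssubst L S) (P : program L S) : Prop :=
  forall R, In R P ->
    (forall s, In s (r_sv R) -> sv_map T s <> None) /\
    (forall s, In s (r_sc R) -> sc_map T s <> None) /\
    (forall s, In s (r_sa R) -> sa_map T s <> None).

Definition renaming_of (th' th : subst) (V : list nat) : Prop :=
  exists r, bijective r /\ forall x, In x V -> th' x = tsubst (rsubst r) (th x).

(* Main.v *)
Require Import Defs.
From Stdlib Require Import List Arith Lia.
Import ListNotations.

Fixpoint formula_ind' {L S} (Pr : formula L S -> Prop)
  (hv : forall v, Pr (FVal v)) (ha : forall p ts, Pr (FAtom p ts))
  (hc : forall c args, Forall Pr args -> Pr (FConn c args)) (f : formula L S) : Pr f :=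
  match f with
  | FVal v => hv v
  | FAtom p ts => ha p ts
  | FConn c args => hc c args
      ((fix go (l : list (formula L S)) : Forall Pr l :=
         match l with [] => Forall_nil _ | a :: l' => Forall_cons _ (formula_ind' Pr hv ha hc a) (go l') end) args)
  end.

Fixpoint tsubst_id (t : term) : tsubst Var t = t :=
  match t with
  | Var x => eq_refl
  | Fn f ts => f_equal (Fn f)
      ((fix go (l : list term) : map (tsubst Var) l = l :=
         match l with [] => eq_refl | a :: l' => f_equal2 (@cons term) (tsubst_id a) (go l') end) ts)
  end.

Lemma renaming_refl (th : subst) V : renaming_of th th V.
Proof.
  exists (fun x => x). split.
  - exists (fun x => x). auto.
  - intros x _. unfold rsubst. symmetry. apply tsubst_id.
Qed.

Lemma fapply_nosym {L S} (T : ssubst L S) (f : formula L S) : nosym f -> fapply T f = f.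
Proof.
  induction f as [v|p ts|c args IH] using formula_ind'; unfold nosym; simpl.
  - destruct v; simpl; intros [H _]; [reflexivity|discriminate].
  - reflexivity.
  - intros [H1 [H2 H3]].
    apply app_eq_nil in H2 as [Hc2 H2]. apply app_eq_nil in H3 as [Hc3 H3].
    f_equal.
    + destruct c; simpl in *; try reflexivity; discriminate.
    + induction IH as [|a l Ha Hl IHl]; simpl in *; [reflexivity|].
      apply app_eq_nil in H1 as [A1 B1]. apply app_eq_nil in H2 as [A2 B2].
      apply app_eq_nil in H3 as [A3 B3].
      f_equal; [apply Ha; unfold nosym; auto| apply IHl; auto].
Qed.

Lemma fvars_fapply {L S} (T : ssubst L S) f : fvars (fapply T f) = fvars f.
Proof.
  induction f as [v|p ts|c args IH] using formula_ind'; simpl; auto.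
  induction IH; simpl; congruence.
Qed.

Lemma has_atom_fapply {L S} (T : ssubst L S) f : has_atom (fapply T f) = has_atom f.
Proof.
  induction f as [v|p ts|c args IH] using formula_ind'; simpl; auto.
  induction IH; simpl; congruence.
Qed.

Lemma fapply_fsubst {L S} (T : ssubst L S) s f : fapply T (fsubst s f) = fsubst s (fapply T f).
Proof.
  induction f as [v|p ts|c args IH] using formula_ind'; simpl; auto.
  f_equal. rewrite !map_map. induction IH; simpl; congruence.
Qed.

Fixpoint cfapply {L S} (T : ssubst L S) (C : ctx L S) : ctx L S :=
  match C with
  | Hole => Hole
  | CCtx c l C' r => CCtx (capply T c) (map (fapply T) l) (cfapply T C') (map (fapply T) r)
  end.

Lemma fapply_fill {L S} (T : ssubst L S) C x : fapply T (fill C x) = fill (cfapply T C) (fapply T x).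
Proof.
  induction C; simpl; auto. rewrite map_app. simpl. congruence.
Qed.

Lemma decomp {L S} (T : ssubst L S) C p ts : forall F, fapply T F = fill C (FAtom p ts) ->
  exists C0, F = fill C0 (FAtom p ts) /\ cfapply T C0 = C.
Proof.
  induction C as [|c l C IH r]; intros F H; simpl in *.
  - exists Hole. destruct F; simpl in *; try discriminate. split; congruence.
  - destruct F as [v|p0 ts0|c0 args]; simpl in *; try discriminate.
    injection H as Hc Ha.
    apply map_eq_app in Ha as [l1 [l2 [E1 [E2 E3]]]]. subst.
    apply map_eq_cons in E3 as [a [tl [E4 [E5 E6]]]]. subst.
    destruct (IH a E5) as [C1 [-> E7]].
    exists (CCtx c0 l1 C1 tl). simpl. split; congruence.
Qed.

Lemma rule_vars_rapply {L S} (T : ssubst L S) s R :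
  rule_vars (rsubst_rule s (rapply T R)) = rule_vars (rsubst_rule s R).
Proof.
  destruct R; simpl; auto. rewrite <- fapply_fsubst, fvars_fapply. reflexivity.
Qed.

Lemma head_rapply {L S} (T : ssubst L S) s R :
  Defs.head (rsubst_rule s (rapply T R)) = Defs.head (rsubst_rule s R).
Proof. destruct R; reflexivity. Qed.

Lemma repl_rapply {L S} (T : ssubst L S) s R :
  fapply T (replacement (rsubst_rule s R)) = replacement (rsubst_rule s (rapply T R)).
Proof.
  destruct R as [p ts a B w|p ts w]; simpl; auto.
  rewrite fapply_fsubst. destruct a; simpl; auto. destruct (sa_map T s0); reflexivity.
Qed.

Lemma ren_apart_iff {L S} (T : ssubst L S) r R F F' sg : fvars F' = fvars F ->
  renamed_apart r (rapply T R) F' sg <-> renamed_apart r R F sg.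
Proof.
  intros E. unfold renamed_apart. rewrite rule_vars_rapply, E. tauto.
Qed.

Lemma ren_apart_ctx {L S} (T : ssubst L S) r R C p ts sg :
  renamed_apart r (rapply T R) (fill (cfapply T C) (FAtom p ts)) sg <-> renamed_apart r R (fill C (FAtom p ts)) sg.
Proof.
  apply ren_apart_iff.
  change (FAtom p ts) with (fapply T (@FAtom L S p ts)).
  rewrite <- fapply_fill. apply fvars_fapply.
Qed.

Lemma as_up {L S} (T : ssubst L S) P st1 st2 : as_step P st1 st2 ->
  as_step (papply T P) (fapply T (fst st1), snd st1) (fapply T (fst st2), snd st2).
Proof.
  intros H. destruct H as [C p ts sg R r th HR Hra Hm | C p ts sg Hf]; simpl.
  - rewrite fapply_fsubst, !fapply_fill, repl_rapply. simpl.
    apply as_rule.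
    + apply in_map. exact HR.
    + apply ren_apart_ctx. exact Hra.
    + rewrite head_rapply. exact Hm.
  - rewrite !fapply_fill. simpl. apply as_fail.
    intros R' r th HR' Hra. apply in_map_iff in HR' as [R [<- HR]].
    rewrite head_rapply. apply (Hf R r th HR).
    apply (proj1 (ren_apart_ctx T r R C p ts sg)). exact Hra.
Qed.

Lemma star_as_up {L S} (T : ssubst L S) P st1 st2 : star (as_step P) st1 st2 ->
  star (as_step (papply T P)) (fapply T (fst st1), snd st1) (fapply T (fst st2), snd st2).
Proof.
  induction 1. apply star_refl. eapply star_step; [apply as_up; eauto | auto].
Qed.

Lemma as_down {L S} (T : ssubst L S) P st1 st2 : as_step (papply T P) st1 st2 ->
  forall F, fapply T F = fst st1 ->
  exists F', as_step P (F, snd st1) (F', snd st2) /\ fapply T F' = fst st2.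
Proof.
  intros H. destruct H as [C p ts sg R' r th HR' Hra Hm | C p ts sg Hf]; simpl; intros F HF;
  destruct (decomp T C p ts F HF) as [C0 [-> HC]]; subst C.
  - apply in_map_iff in HR' as [R [<- HR]].
    eexists. split.
    + apply as_rule; eauto.
      * apply (proj1 (ren_apart_ctx T r R C0 p ts sg)). exact Hra.
      * rewrite <- head_rapply with (T := T). exact Hm.
    + rewrite fapply_fsubst, fapply_fill, repl_rapply. reflexivity.
  - eexists. split.
    + apply as_fail. intros R r th0 HR Hra.
      rewrite <- head_rapply with (T := T). apply Hf.
      * apply in_map. exact HR.
      * apply ren_apart_ctx. exact Hra.
    + rewrite fapply_fill. reflexivity.
Qed.

Lemma star_as_down {L S} (T : ssubst L S) P st1 st2 : star (as_step (papply T P)) st1 st2 ->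
  forall F, fapply T F = fst st1 ->
  exists F', star (as_step P) (F, snd st1) (F', snd st2) /\ fapply T F' = fst st2.
Proof.
  induction 1 as [st|st1 st2 st3 H1 H2 IH]; intros F HF.
  - exists F. split; [apply star_refl|auto].
  - destruct (as_down T P st1 st2 H1 F HF) as [F1 [S1 E1]].
    destruct (IH F1 E1) as [F2 [S2 E2]].
    exists F2. split; auto. eapply star_step; eauto.
Qed.

Definition cval {L S} (r : Lcar L) : formula L S := FVal (VConc r).

Fixpoint allvals {L S} (l : list (formula L S)) : option (list (Lcar L)) :=
  match l with
  | [] => Some []
  | FVal (VConc r) :: l' => option_map (cons r) (allvals l')
  | _ => None
  end.

Lemma allvals_map {L S} rs : @allvals L S (map cval rs) = Some rs.
Proof. induction rs; simpl; auto. rewrite IHrs. reflexivity. Qed.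

Lemma allvals_some {L S} l rs : @allvals L S l = Some rs -> l = map cval rs.
Proof.
  revert rs; induction l as [|a l IH]; simpl; intros rs H.
  - injection H as <-. reflexivity.
  - destruct a as [[r|]| |]; try discriminate.
    destruct (allvals l) eqn:E; simpl in H; try discriminate.
    injection H as <-. simpl. rewrite (IH l0 eq_refl). reflexivity.
Qed.

Definition node {L S} (c : csym L S) (args : list (formula L S)) : formula L S :=
  match c with
  | Conc c0 => match allvals args with
      | Some rs => if Nat.eqb (length rs) (ccarity c0) then FVal (VConc (ctruth c0 rs)) else FConn c args
      | None => FConn c args end
  | _ => FConn c args
  end.

Fixpoint peval {L S} (f : formula L S) : formula L S :=
  match f with
  | FVal v => FVal v
  | FAtom p ts => FAtom p ts
  | FConn c args => node c (map peval args)
  end.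

Lemma peval_fill {L S} (C : ctx L S) a b : peval a = peval b -> peval (fill C a) = peval (fill C b).
Proof. intros H; induction C; simpl; auto. rewrite !map_app. simpl. congruence. Qed.

Lemma is_step_peval {L S} (st1 st2 : state L S) : is_step st1 st2 -> peval (fst st1) = peval (fst st2).
Proof.
  destruct 1. simpl. apply peval_fill. simpl. rewrite map_map. simpl.
  change (map (fun x => FVal (VConc x)) rs) with (@map _ _ (@cval L S) rs).
  unfold node. rewrite allvals_map. apply Nat.eqb_eq in H. rewrite H. reflexivity.
Qed.

Lemma star_peval {L S} (st1 st2 : state L S) : star is_step st1 st2 -> peval (fst st1) = peval (fst st2).
Proof. induction 1; auto. rewrite (is_step_peval _ _ H). auto. Qed.

Fixpoint ccomp {L S} (C C' : ctx L S) : ctx L S :=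
  match C with Hole => C' | CCtx c l C1 r => CCtx c l (ccomp C1 C') r end.

Lemma fill_comp {L S} (C C' : ctx L S) x : fill C (fill C' x) = fill (ccomp C C') x.
Proof. induction C; simpl; congruence. Qed.

Lemma is_step_ctx {L S} (C : ctx L S) st1 st2 : is_step st1 st2 ->
  is_step (fill C (fst st1), snd st1) (fill C (fst st2), snd st2).
Proof. destruct 1; simpl. rewrite !fill_comp. apply is_conn; auto. Qed.

Lemma star_ctx {L S} (C : ctx L S) st1 st2 : star is_step st1 st2 ->
  star is_step (fill C (fst st1), snd st1) (fill C (fst st2), snd st2).
Proof. induction 1. apply star_refl. eapply star_step; [apply is_step_ctx; eauto|auto]. Qed.

Lemma star_trans {A} (R : A -> A -> Prop) x y z : star R x y -> star R y z -> star R x z.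
Proof. induction 1; auto. intros; eapply star_step; eauto. Qed.

Lemma star_peval_reach {L S} (f : formula L S) : forall s, star is_step (f, s) (peval f, s).
Proof.
  induction f as [v|p ts|c args IH] using formula_ind'; intros s; simpl; try apply star_refl.
  apply star_trans with (FConn c (map peval args), s).
  - assert (G : forall l, star is_step (FConn c (l ++ args), s) (FConn c (l ++ map peval args), s)).
    { induction IH as [|a args' Ha Hl IHl]; intros l; simpl; [apply star_refl|].
      apply star_trans with (FConn c (l ++ peval a :: args'), s).
      + apply (star_ctx (CCtx c l Hole args') (a, s) (peval a, s)). apply Ha.
      + specialize (IHl (l ++ [peval a])). rewrite <- !app_assoc in IHl. exact IHl. }
    apply (G []).
  - unfold node. destruct c as [c0| |]; try apply star_refl.
    destruct (allvals (map peval args)) as [rs|] eqn:E; try apply star_refl.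
    destruct (Nat.eqb (length rs) (ccarity c0)) eqn:E2; try apply star_refl.
    apply allvals_some in E. rewrite E. apply Nat.eqb_eq in E2.
    eapply star_step; [|apply star_refl].
    apply (is_conn Hole c0 rs s E2).
Qed.

Lemma node_inv {L S} (c c' : csym L S) args args' : node c args = FConn c' args' ->
  c' = c /\ args' = args /\ (forall c0 rs, c = Conc c0 -> args = map cval rs -> length rs <> ccarity c0).
Proof.
  unfold node. destruct c as [c0| |].
  - destruct (allvals args) as [rs|] eqn:E.
    + destruct (Nat.eqb (length rs) (ccarity c0)) eqn:E2; intros H; try discriminate.
      injection H as <- <-. repeat split; auto. intros c1 rs1 H1 H2. injection H1 as <-.
      subst. rewrite allvals_map in E. injection E as <-. apply Nat.eqb_neq; auto.
    + intros H; injection H as <- <-. repeat split; auto. intros c1 rs1 H1 H2. subst.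
      rewrite allvals_map in E. discriminate.
  - intros H; injection H as <- <-. repeat split; auto; discriminate.
  - intros H; injection H as <- <-. repeat split; auto; discriminate.
Qed.

Lemma peval_irred_aux {L S} (C : ctx L S) c rs : length rs = ccarity c ->
  forall x, peval x <> fill C (FConn (Conc c) (map cval rs)).
Proof.
  intros Hl. induction C as [|c1 l C IH r]; intros x Hx; simpl in Hx;
  destruct x as [v|p ts|c' args]; simpl in Hx; try discriminate.
  - apply node_inv in Hx as [Ec [E H]]; subst c'. eapply H; eauto.
  - apply node_inv in Hx as [Ec [E H]]; subst c'.
    symmetry in E. apply map_eq_app in E as [l1 [l2 [E1 [E2 E3]]]].
    apply map_eq_cons in E3 as [a [tl [E4 [E5 E6]]]].
    eapply IH; eauto.
Qed.

Lemma peval_irred {L S} (f : formula L S) th : ~ (exists st, is_step (peval f, th) st).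
Proof.
  intros [st H].
  assert (G : forall st1 st2, is_step st1 st2 -> forall x : formula L S, fst st1 <> peval x).
  { destruct 1; simpl. intros x Hx. eapply peval_irred_aux; eauto. }
  exact (G _ _ H f eq_refl).
Qed.

Lemma val_irred {L S} (v : value L S) th : ~ (exists st, is_step (FVal v, th) st).
Proof.
  intros [st H].
  assert (G : forall st1 st2, is_step st1 st2 -> forall v : value L S, fst st1 <> FVal v).
  { destruct 1; simpl. destruct C; discriminate. }
  exact (G _ _ H v eq_refl).
Qed.

Lemma is_up {L S} (T : ssubst L S) st1 st2 : is_step st1 st2 ->
  is_step (fapply T (fst st1), snd st1) (fapply T (fst st2), snd st2).
Proof.
  destruct 1; simpl. rewrite !fapply_fill. simpl. rewrite map_map. simpl.
  apply is_conn; auto.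
Qed.

Lemma star_is_up {L S} (T : ssubst L S) st1 st2 : star is_step st1 st2 ->
  star is_step (fapply T (fst st1), snd st1) (fapply T (fst st2), snd st2).
Proof. induction 1. apply star_refl. eapply star_step; [apply is_up; eauto|auto]. Qed.

Theorem theorem1 (L : MALattice) (S : ssig) (P : program L S) (Q : formula L S)
  (T : ssubst L S) :
  wf_program P -> wf_formula Q = true -> nosym Q -> covers T P ->
  forall v : Lcar L,
    (forall th : subst, fca (papply T P) Q v th ->
       exists (Q' : formula L S) (th' : subst),
         sfca P Q Q' th' /\
         star is_step (fapply T Q', th') (FVal (VConc v), th') /\
         renaming_of th' th (fvars Q)) /\
    (forall (Q' : formula L S) (th' : subst),
       sfca P Q Q' th' ->
       star is_step (fapply T Q', th') (FVal (VConc v), th') ->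
       exists th : subst, fca (papply T P) Q v th /\ renaming_of th' th (fvars Q)).
Proof.
  intros _ _ HQ _ v. pose proof (fapply_nosym T Q HQ) as EQ. split.
  - intros th [Q'' [[sg [Hst [Hlex Hth]]] [Hs2 Hirr]]].
    destruct (star_as_down T P _ _ Hst Q EQ) as [F' [HF1 HF2]]. simpl in *.
    exists (peval F'), th. split; [|split].
    + exists F'. split; [|split].
      * exists sg. split; auto. unfold lexpr in *. rewrite <- HF2, has_atom_fapply in Hlex. auto.
      * apply star_peval_reach.
      * apply peval_irred.
    + assert (E1 : peval (fapply T (peval F')) = FVal (VConc v)).
      { pose proof (star_peval _ _ (star_is_up T _ _ (star_peval_reach F' th))) as E.
        simpl in E. rewrite <- E, HF2. apply (star_peval _ _ Hs2). }
      rewrite <- E1. apply star_peval_reach.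
    + apply renaming_refl.
  - intros Q' th' [F'' [[sg [Hst [Hlex Hth]]] [Hs2 Hirr]]] Hv.
    exists th'. split; [|apply renaming_refl].
    exists (fapply T F''). split; [|split].
    + exists sg. split; [|split]; auto.
      * pose proof (star_as_up T P _ _ Hst) as H. simpl in H. rewrite EQ in H. exact H.
      * unfold lexpr. rewrite has_atom_fapply. exact Hlex.
    + eapply star_trans; [apply (star_is_up T _ _ Hs2)|exact Hv].
    + apply val_irred.
Qed.
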